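(* For every integer $k>1$ and $0<\gamma<\frac12$, $$k\,h(\gamma)-1\;\le\;F(k,\gamma)\;\le\;k\,h(\gamma)+\log\!\big(1+(1-2\gamma)^k\big)-1.$$ In particular $F(k,\gamma)=k\,h(\gamma)-1+O\big((1-2\gamma)^k\big)$ as $k\to\infty$.
   Context: Logarithms are base 2 and $h(t)=-t\log t-(1-t)\log(1-t)$. For real $k\ge 2$ and $\gamma\in(0,\frac12)$, $$F(k,\gamma)=\min_{x\in(0,1)}\Big[\log\big((1+x)^k+(1-x)^k\big)-k\gamma\log x-1\Big].$$ *)

(* Defs.v *)
From Stdlib Require Import Reals Lra ClassicalEpsilon.
Open Scope R_scope.

Definition log2 (x : R) : R := ln x / ln 2.

Definition h (t : R) : R := - t * log2 t - (1 - t) * log2 (1 - t).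

Definition Gfun (k gamma x : R) : R :=
  log2 (Rpower (1 + x) k + Rpower (1 - x) k) - k * gamma * log2 x - 1.

Definition is_min_on_01 (g : R -> R) (m : R) : Prop :=
  (exists x, 0 < x < 1 /\ g x = m) /\ (forall x, 0 < x < 1 -> m <= g x).

(* F(k,gamma) = min_{x in (0,1)} Gfun k gamma x  (the minimum exists for
   k >= 2, 0 < gamma < 1/2; we select it by Hilbert's epsilon). *)
Definition F (k gamma : R) : R :=
  epsilon (inhabits 0) (is_min_on_01 (Gfun k gamma)).

(* Main.v *)
Require Import Defs.
From Stdlib Require Import Reals Lra Lia ClassicalEpsilon.
From Coquelicot Require Import Coquelicot.
Open Scope R_scope.

Definition HH (k : nat) (g x : R) : R :=
  ln ((1+x)^k + (1-x)^k) - INR k * g * ln x.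

Lemma ln_le_sub1 y : 0 < y -> ln y <= y - 1.
Proof. intros Hy. pose proof (exp_ineq1_le (ln y)). rewrite exp_ln in H; lra. Qed.

Lemma gibbs g x : 0 < g < 1 -> 0 < x ->
  - g * ln g - (1 - g) * ln (1 - g) <= ln (1 + x) - g * ln x.
Proof.
  intros [g0 g1] x0.
  assert (A := ln_le_sub1 (/ ((1-g)*(1+x))) ltac:(apply Rinv_0_lt_compat; nra)).
  assert (B := ln_le_sub1 (x / (g*(1+x))) ltac:(apply Rdiv_lt_0_compat; nra)).
  rewrite ln_Rinv, ln_mult in A by (try apply Rinv_0_lt_compat; nra).
  unfold Rdiv in B. rewrite ln_mult, ln_Rinv, ln_mult in B by (try apply Rinv_0_lt_compat; nra).
  assert (E1 : (1-g) * (/ ((1 - g) * (1 + x)) - 1) + g * (x * / (g * (1 + x)) - 1) = 0)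
    by (field; split; lra).
  assert (A' := Rmult_le_compat_l (1-g) _ _ ltac:(lra) A).
  assert (B' := Rmult_le_compat_l g _ _ ltac:(lra) B).
  lra.
Qed.

Lemma P_pos k x : 0 < x <= 1 -> 0 < (1+x)^k + (1-x)^k.
Proof.
  intros. assert (0 < (1+x)^k) by (apply pow_lt; lra).
  assert (0 <= (1-x)^k) by (apply pow_le; lra). lra.
Qed.

Lemma HH_lower k g x : 0 < g < 1 -> 0 < x <= 1 ->
  INR k * (- g * ln g - (1 - g) * ln (1 - g)) <= HH k g x.
Proof.
  intros Hg Hx. unfold HH.
  assert (0 < (1+x)^k) by (apply pow_lt; lra).
  assert (0 <= (1-x)^k) by (apply pow_le; lra).
  assert (ln ((1+x)^k) <= ln ((1+x)^k + (1-x)^k)) by (apply ln_le; lra).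
  rewrite ln_pow in H1 by lra.
  pose proof (gibbs g x Hg (proj1 Hx)).
  pose proof (pos_INR k). nra.
Qed.

Lemma G_HH k g x : 0 < x < 1 ->
  Gfun (INR k) g x = HH k g x / ln 2 - 1.
Proof.
  intros Hx. unfold Gfun, HH, log2.
  rewrite !Rpower_pow by lra.
  assert (0 < ln 2) by (rewrite <- ln_1; apply ln_increasing; lra). field; lra.
Qed.

Lemma HH_cont k g y : 0 < y <= 1 -> continuity_pt (HH k g) y.
Proof.
  intros Hy. apply continuity_pt_filterlim.
  apply (ex_derive_continuous (HH k g)).
  unfold HH. auto_derive. pose proof (P_pos k y Hy). replace (1 + - y) with (1 - y) by ring; repeat split; lra. 
Qed.

Lemma HH_deriv1 m g : derivable_pt_lim (HH (S (S m)) g) 1 (INR (S (S m)) * (/2 - g)).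
Proof.
  apply is_derive_Reals. unfold HH. auto_derive.
  - replace (1 + - (1)) with 0 by ring. rewrite !Rmult_0_l, Rplus_0_r.
    pose proof (pow_lt (1+1) m ltac:(lra)). repeat split; nra.
  - replace (1 + - (1)) with 0 by ring. rewrite !Rmult_0_l, Rplus_0_r.
    change (match m with | 0%nat => 1 | S _ => INR m + 1 end) with (INR (S m)).
    rewrite (S_INR (S m)).
    pose proof (pow_lt (1+1) m ltac:(lra)). field. lra.
Qed.

Lemma exists_min m g : 0 < g < 1/2 ->
  exists xs, 0 < xs < 1 /\ forall x, 0 < x < 1 -> HH (S (S m)) g xs <= HH (S (S m)) g x.
Proof.
  intros Hg. set (k := S (S m)). set (K := INR k).
  assert (HK : 2 <= K) by (unfold K, k; rewrite !S_INR; pose proof (pos_INR m); lra).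
  set (l := K * (/2 - g)).
  assert (Hl : 0 < l) by (unfold l; nra).
  destruct (HH_deriv1 m g (l/2) ltac:(lra)) as [delta Hd].
  set (t := Rmin (delta/2) (1/2)).
  assert (Ht : 0 < t <= 1/2) by (unfold t; pose proof (cond_pos delta);
     split; [apply Rmin_pos; lra | apply Rmin_r]).
  assert (Htd : t < delta) by (unfold t; pose proof (cond_pos delta);
     pose proof (Rmin_l (delta/2) (1/2)); lra).
  set (c := 1 - t). assert (Hcv : c = 1 - t) by reflexivity.
  assert (Hc : HH k g c < HH k g 1).
  { specialize (Hd (-t) ltac:(lra) ltac:(rewrite Rabs_Ropp, Rabs_pos_eq; lra)).
    replace (1 + - t) with c in Hd by (unfold c; ring).
    apply Rabs_def2 in Hd. destruct Hd as [Hd1 Hd2].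
    set (q := (HH (S (S m)) g c - HH (S (S m)) g 1) / - t) in *.
    assert (HH k g c - HH k g 1 = q * - t) by (unfold q, k; field; lra).
    change (INR (S (S m)) * (/ 2 - g)) with l in Hd1, Hd2.
    assert (0 < q * t) by (apply Rmult_lt_0_compat; lra). lra. }
  set (a := Rmin (c/2) (exp (-(Rabs (HH k g c) + 1) / (K * g)))).
  assert (Ha0 : 0 < a) by (unfold a; apply Rmin_pos; [lra | apply exp_pos]).
  assert (Hac : a <= c/2) by apply Rmin_l.
  assert (Hsmall : forall x, 0 < x < a -> HH k g c < HH k g x).
  { intros x Hx. unfold HH at 2.
    assert (0 < (1+x)^k) by (apply pow_lt; lra).
    assert (0 <= (1-x)^k) by (apply pow_le; lra).
    assert (ln ((1+x)^k) <= ln ((1+x)^k + (1-x)^k)) by (apply ln_le; lra).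
    rewrite ln_pow in H1 by lra.
    assert (0 <= ln (1+x)) by (rewrite <- ln_1; apply ln_le; lra).
    assert (ln x < ln a) by (apply ln_increasing; lra).
    assert (ln a <= -(Rabs (HH k g c) + 1) / (K * g)).
    { rewrite <- (ln_exp (-(Rabs (HH k g c) + 1) / (K * g))).
      apply ln_le; [lra | apply Rmin_r]. }
    assert (0 < K * g) by nra.
    assert (K * g * ln x < - (Rabs (HH k g c) + 1)).
    { assert (Hq : K * g * ln x < K * g * (-(Rabs (HH k g c) + 1) / (K * g))) by
        (apply Rmult_lt_compat_l; lra).
      replace (K * g * (-(Rabs (HH k g c) + 1) / (K * g))) with (-(Rabs (HH k g c) + 1)) in Hq
        by (field; lra). lra. }
    pose proof (Rle_abs (HH k g c)). unfold K, k in *. nra. }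
  destruct (continuity_ab_min (HH k g) a 1 ltac:(lra)
     (fun y Hy => HH_cont k g y ltac:(lra))) as [mx [Hmx Hmxr]].
  assert (Hmc : HH k g mx <= HH k g c) by (apply Hmx; lra).
  assert (mx <> 1) by (intro E; rewrite E in Hmc; lra).
  exists mx. split; [lra|].
  intros x Hx. destruct (Rlt_or_le x a) as [Hxa|Hxa].
  - pose proof (Hsmall x ltac:(lra)). fold k. lra.
  - apply Hmx; lra.
Qed.

Theorem mainTheorem12 (k : nat) (gamma : R) :
  (1 < k)%nat -> 0 < gamma < 1 / 2 ->
  INR k * h gamma - 1 <= F (INR k) gamma /\
  F (INR k) gamma <= INR k * h gamma + log2 (1 + (1 - 2 * gamma) ^ k) - 1.
Proof.
  intros Hk Hg.
  destruct k as [|[|m]]; try (exfalso; lia).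
  assert (Hln2 : 0 < ln 2) by (rewrite <- ln_1; apply ln_increasing; lra).
  destruct (exists_min m gamma Hg) as [xs [Hxs Hmin]].
  assert (Hex : exists v, is_min_on_01 (Gfun (INR (S (S m))) gamma) v).
  { exists (Gfun (INR (S (S m))) gamma xs). split.
    - exists xs; split; auto.
    - intros x Hx. rewrite !G_HH by lra.
      pose proof (Hmin x Hx).
      apply Rplus_le_compat_r. apply Rmult_le_compat_r; [|lra].
      left; apply Rinv_0_lt_compat; lra. }
  pose proof (epsilon_spec (inhabits 0) _ Hex) as [[x0 [Hx0 E0]] Hall].
  fold (F (INR (S (S m))) gamma) in E0, Hall.
  set (k := S (S m)) in *.
  assert (Hh : h gamma = (- gamma * ln gamma - (1 - gamma) * ln (1 - gamma)) / ln 2)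
    by (unfold h, log2; field; lra).
  split.
  - rewrite <- E0, G_HH by lra. rewrite Hh.
    pose proof (HH_lower k gamma x0 ltac:(lra) ltac:(lra)).
    assert (INR k * ((- gamma * ln gamma - (1 - gamma) * ln (1 - gamma)) / ln 2)
       = INR k * (- gamma * ln gamma - (1 - gamma) * ln (1 - gamma)) / ln 2) by (field; lra).
    rewrite H0. apply Rplus_le_compat_r. apply Rmult_le_compat_r; [|lra].
    left; apply Rinv_0_lt_compat; lra.
  - set (c0 := gamma / (1 - gamma)).
    assert (Hc0 : 0 < c0 < 1) by (unfold c0; split;
      [apply Rdiv_lt_0_compat; lra | apply Rmult_lt_reg_r with (1-gamma); [lra|];
       unfold Rdiv; rewrite Rmult_assoc, Rinv_l; lra]).
    eapply Rle_trans; [apply Hall; exact Hc0|].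
    rewrite G_HH by lra. unfold HH, log2. rewrite Hh.
    assert (E1 : 1 + c0 = / (1 - gamma)) by (unfold c0; field; lra).
    assert (E2 : 1 - c0 = (1 - 2*gamma) * / (1 - gamma)) by (unfold c0; field; lra).
    rewrite E1, E2, Rpow_mult_distr, !pow_inv.
    assert (0 < (1-gamma)^k) by (apply pow_lt; lra).
    assert (0 <= (1-2*gamma)^k) by (apply pow_le; lra).
    replace (/ (1 - gamma) ^ k + (1 - 2 * gamma) ^ k * / (1 - gamma) ^ k)
      with ((1 + (1 - 2 * gamma) ^ k) * / (1 - gamma) ^ k) by ring.
    rewrite ln_mult, ln_Rinv, ln_pow by (try apply Rinv_0_lt_compat; lra).
    unfold c0. rewrite ln_div by lra.
    right. field. lra.
Qed.
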